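(* Let $T$ be a positive invertible operator on a separable real or complex Hilbert space $\mathcal{H}$ and let $K>0$. The ellipsoidal surface $\mathcal{E}_T=T\mathcal{S}_1$ contains a tight frame $\{y_j\}$ for $\mathcal{H}$ with frame bound $K$ if and only if the operator $R=KT^{-2}$ admits a projection decomposition. In this case $R$ is the frame operator of the frame $\{T^{-1}y_j\}$ consisting of unit vectors.
   Context: $\mathcal{S}_1=\{x\in\mathcal{H}:\|x\|=1\}$. A sequence $\{x_j\}$ is a frame if there are $0<A\le B$ with $A\|x\|^2\le\sum_j|\langle x,x_j\rangle|^2\le B\|x\|^2$ for all $x$; it is tight with frame bound $K$ if $A=B=K$. The frame operator is $Sw=\sum_j\langle w,x_j\rangle x_j$ (strongly convergent). A positive operator has a projection decomposition if it is the sum of a finite or infinite sequence of (not necessarily mutually orthogonal) self-adjoint projections, with convergence in the strong operator topology. *)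

(* Defs.v *)
(* scalars are a realType R (real case) or R[i] (complex case). *)
From HB Require Import structures.
From mathcomp Require Import all_boot all_order all_algebra.
From mathcomp Require Import reals.
From mathcomp Require Export complex.
Set Implicit Arguments. Unset Strict Implicit. Unset Printing Implicit Defensive.
Import Order.TTheory GRing.Theory Num.Theory.
Local Open Scope ring_scope.

Section Hilbert.
Variables (K : numFieldType) (cj : K -> K) (V : lmodType K) (ip : V -> V -> K).

Definition nsq (x : V) : K := ip x x.

Definition cvgK (u : nat -> K) (l : K) : Prop :=
  forall e : K, 0 < e -> exists N : nat, forall n, (N <= n)%N -> `|u n - l| < e.

Definition cvgV (u : nat -> V) (l : V) : Prop :=
  forall e : K, 0 < e -> exists N : nat, forall n, (N <= n)%N -> `|nsq (u n - l)| < e.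

Definition cauchyV (u : nat -> V) : Prop :=
  forall e : K, 0 < e -> exists N : nat, forall m n, (N <= m)%N -> (N <= n)%N ->
    `|nsq (u m - u n)| < e.

(* inner product: linear in the first argument, cj-symmetric, positive definite;
   cj is the identity in the real case and complex conjugation in the complex case *)
Definition inner_product : Prop :=
  [/\ forall (a : K) (x y z : V), ip (a *: x + y) z = a * ip x z + ip y z,
      forall x y, ip x y = cj (ip y x),
      forall x, 0 <= ip x x &
      forall x, ip x x = 0 -> x = 0].

Definition separable_hilbert : Prop :=
  [/\ inner_product,
      forall u : nat -> V, cauchyV u -> exists l, cvgV u l &
      exists d : nat -> V, forall x (e : K), 0 < e -> exists n, `|nsq (x - d n)| < e].

Definition bounded_op (A : V -> V) : Prop :=
  exists M : K, forall x, `|nsq (A x)| <= M * `|nsq x|.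

Definition self_adjoint (A : V -> V) : Prop := forall x y, ip (A x) y = ip x (A y).

Definition positive_op (A : {linear V -> V}) : Prop :=
  [/\ bounded_op A, self_adjoint A & forall x, 0 <= ip (A x) x].

Definition sa_projection (P : {linear V -> V}) : Prop :=
  (forall x, P (P x) = P x) /\ self_adjoint P.

(* index set of a finite (Some n: indices j < n) or infinite (None: all j) sequence *)
Definition inJ (N : option nat) (j : nat) : bool :=
  if N is Some n then (j < n)%N else true.

Definition psum (N : option nat) (f : nat -> K) (n : nat) : K :=
  \sum_(j < n | inJ N j) f j.
Definition psumV (N : option nat) (f : nat -> V) (n : nat) : V :=
  \sum_(j < n | inJ N j) f j.

Definition is_frame (N : option nat) (x : nat -> V) : Prop :=
  exists A B : K, [/\ 0 < A, A <= B &
    forall w, exists s : K, cvgK (psum N (fun j => `|ip w (x j)| ^+ 2)) s /\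
      A * nsq w <= s <= B * nsq w].

Definition is_tight_frame (N : option nat) (x : nat -> V) (k : K) : Prop :=
  forall w, cvgK (psum N (fun j => `|ip w (x j)| ^+ 2)) (k * nsq w).

Definition is_frame_operator (N : option nat) (x : nat -> V) (S : V -> V) : Prop :=
  forall w, cvgV (psumV N (fun j => ip w (x j) *: x j)) (S w).

Definition in_ellipsoid (T : V -> V) (y : V) : Prop :=
  exists u : V, nsq u = 1 /\ y = T u.

Definition projection_decomposition (Rop : V -> V) : Prop :=
  exists (N : option nat) (P : nat -> {linear V -> V}),
    (forall j, inJ N j -> sa_projection (P j)) /\
    forall w, cvgV (psumV N (fun j => P j w)) (Rop w).

End Hilbert.

(* Main.v *)
Require Import Defs.
From HB Require Import structures.
From mathcomp Require Import all_boot all_order all_algebra.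
From mathcomp Require Import reals complex ring.
From Stdlib Require Import Classical.
Import Order.TTheory GRing.Theory Num.Theory.
Local Open Scope ring_scope.

Section Gen.
Variables (K : numFieldType) (cj : K -> K) (V : lmodType K) (ip : V -> V -> K).
Hypothesis cjD : forall x y, cj (x + y) = cj x + cj y.
Hypothesis cjM : forall x y, cj (x * y) = cj x * cj y.
Hypothesis cjK : forall x, cj (cj x) = x.
Hypothesis cj_norm : forall z, z * cj z = `|z| ^+ 2.
Hypothesis cj_ge0 : forall r, 0 <= r -> cj r = r.
Hypothesis IP : inner_product cj ip.

Lemma cj0 : cj 0 = 0.
Proof. by apply: (addrI (cj 0)); rewrite -cjD !addr0. Qed.
Lemma cjN x : cj (- x) = - cj x.
Proof. by apply: (addrI (cj x)); rewrite -cjD !subrr cj0. Qed.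
Lemma normcj z : `|cj z| = `|z|.
Proof.
have h : `|cj z| ^+ 2 = `|z| ^+ 2 by rewrite -cj_norm cjK mulrC cj_norm.
by apply/eqP; rewrite -(eqrXn2 (_ : 0 < 2)%N) ?normr_ge0 // h.
Qed.

Lemma ipZlD a x y z : ip (a *: x + y) z = a * ip x z + ip y z.
Proof. by case: IP. Qed.
Lemma ipC x y : ip x y = cj (ip y x).
Proof. by case: IP. Qed.
Lemma nsq_ge0 x : 0 <= nsq ip x.
Proof. by case: IP => _ _ H _; exact: H. Qed.
Lemma nsq_eq0 x : nsq ip x = 0 -> x = 0.
Proof. by case: IP => _ _ _ H /H. Qed.
Lemma ip0l z : ip 0 z = 0.
Proof.
have h := ipZlD 1 0 0 z; rewrite scaler0 addr0 mul1r in h.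
by apply: (addrI (ip 0 z)); rewrite addr0 -{1}h.
Qed.
Lemma ipDl x y z : ip (x + y) z = ip x z + ip y z.
Proof. by have := ipZlD 1 x y z; rewrite scale1r mul1r. Qed.
Lemma ipZl a x z : ip (a *: x) z = a * ip x z.
Proof. by have := ipZlD a x 0 z; rewrite !addr0 ip0l addr0. Qed.
Lemma ipNl x z : ip (- x) z = - ip x z.
Proof. by rewrite -scaleN1r ipZl mulN1r. Qed.
Lemma ipBl x y z : ip (x - y) z = ip x z - ip y z.
Proof. by rewrite ipDl ipNl. Qed.
Lemma ip0r z : ip z 0 = 0.
Proof. by rewrite ipC ip0l cj0. Qed.
Lemma ipDr x y z : ip z (x + y) = ip z x + ip z y.
Proof. by rewrite ipC ipDl cjD -!ipC. Qed.
Lemma ipZr a x z : ip z (a *: x) = cj a * ip z x.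
Proof. by rewrite ipC ipZl cjM -ipC. Qed.
Lemma ipNr x z : ip z (- x) = - ip z x.
Proof. by rewrite ipC ipNl cjN -ipC. Qed.
Lemma ipBr x y z : ip z (x - y) = ip z x - ip z y.
Proof. by rewrite ipDr ipNr. Qed.
Lemma ip_suml I r (P : pred I) (F : I -> V) z :
  ip (\sum_(i <- r | P i) F i) z = \sum_(i <- r | P i) ip (F i) z.
Proof. exact: (big_morph (fun x => ip x z) (fun x y => ipDl x y z) (ip0l z)). Qed.
Lemma ip_sumr I r (P : pred I) (F : I -> V) z :
  ip z (\sum_(i <- r | P i) F i) = \sum_(i <- r | P i) ip z (F i).
Proof. exact: (big_morph (fun x => ip z x) (fun x y => ipDr x y z) (ip0r z)). Qed.
Lemma ipmulC x y : ip x y * ip y x = `|ip x y| ^+ 2.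
Proof. by rewrite [ip y x]ipC cj_norm. Qed.
Lemma nsq_real x : nsq ip x \is Num.real.
Proof. exact: ger0_real (nsq_ge0 x). Qed.
Lemma nsq_norm x : `|nsq ip x| = nsq ip x.
Proof. exact: ger0_norm (nsq_ge0 x). Qed.

Lemma CS x y : `|ip x y| ^+ 2 <= nsq ip x * nsq ip y.
Proof.
have [->|y0] := eqVneq y 0; first by rewrite ip0r normr0 expr0n /= /nsq ip0r mulr0.
have ny0 : nsq ip y != 0 by apply: contra y0 => /eqP /nsq_eq0 ->.
have nyp : 0 < nsq ip y by rewrite lt0r ny0 nsq_ge0.
set a := ip x y; set ny := nsq ip y; set s := a / ny.
have := nsq_ge0 (x - s *: y).
rewrite /nsq ipBl !ipBr !ipZl !ipZr -/a.
have -> : ip y x = cj a by rewrite ipC.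
have -> : cj s = cj a / ny.
  have hi : 0 <= ny^-1 by rewrite invr_ge0 ltW.
  by rewrite /s cjM (cj_ge0 _ hi).
rewrite -/(nsq ip x) -/(nsq ip y) -/ny.
have -> : nsq ip x - cj a / ny * a - (s * cj a - s * (cj a / ny * ny)) =
   nsq ip x - (a * cj a) / ny.
  by rewrite /s; field.
rewrite cj_norm subr_ge0 ler_pdivrMr //.
Qed.

Lemma lt_all_eq0 (x : K) : 0 <= x -> (forall e, 0 < e -> x < e) -> x = 0.
Proof.
move=> x0 H; have [/eqP//|xn] := boolP (x == 0).
by have := H x; rewrite lt0r xn x0 ltxx => /(_ isT).
Qed.

Lemma sqr_lt (a e : K) : 0 <= a -> 0 < e -> a ^+ 2 < e ^+ 2 -> a < e.
Proof.
move=> a0 e0; rewrite (ltr_pXn2r (n:=2)) //; rewrite nnegrE ?ltW //.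
Qed.

Lemma nsqN x : nsq ip (- x) = nsq ip x.
Proof. by rewrite /nsq ipNl ipNr opprK. Qed.
Lemma nsqB x y : nsq ip (x - y) = nsq ip (y - x).
Proof. by rewrite -nsqN opprB. Qed.

Lemma nsqD_le p q : nsq ip (p + q) <= 2 * (nsq ip p + nsq ip q).
Proof.
have e : nsq ip (p + q) + nsq ip (p - q) = 2 * (nsq ip p + nsq ip q).
  rewrite /nsq !ipDl !ipDr !ipNl !ipNr; ring.
by rewrite -e lerDl nsq_ge0.
Qed.

Lemma cvgK_unique (u : nat -> K) a b : cvgK u a -> cvgK u b -> a = b.
Proof.
move=> ha hb; apply/eqP; rewrite -subr_eq0; apply/eqP.
apply/normr0_eq0/lt_all_eq0 => [|e e0]; first exact: normr_ge0.
have e2 : 0 < e / 2 by rewrite divr_gt0.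
have [N1 H1] := ha _ e2; have [N2 H2] := hb _ e2.
have := H1 (maxn N1 N2) (leq_maxl _ _); have := H2 (maxn N1 N2) (leq_maxr _ _).
set v := u _ => h2 h1.
apply: (le_lt_trans (_ : _ <= `|v - a| + `|v - b|)).
  by rewrite -[`|v - a|]normrN opprB (le_trans _ (ler_normD _ _)) // addrA subrK.
by rewrite (splitr e) ltrD.
Qed.

Lemma cvgV_unique u a b : cvgV ip u a -> cvgV ip u b -> a = b.
Proof.
move=> ha hb; apply/eqP; rewrite -subr_eq0; apply/eqP/nsq_eq0.
apply/lt_all_eq0 => [|e e0]; first exact: nsq_ge0.
have e4 : 0 < e / 4 by rewrite divr_gt0.
have [N1 H1] := ha _ e4; have [N2 H2] := hb _ e4.
have := H1 (maxn N1 N2) (leq_maxl _ _); have := H2 (maxn N1 N2) (leq_maxr _ _).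
rewrite !nsq_norm; set v := u _ => h2 h1.
apply: (le_lt_trans (_ : _ <= 2 * (nsq ip (a - v) + nsq ip (v - b)))).
  by have := nsqD_le (a - v) (v - b); rewrite addrA subrK.
rewrite nsqB; apply: (lt_le_trans (_ : _ < 2 * (e / 4 + e / 4))).
  by rewrite ltr_pM2l // ltrD.
have -> : 2 * (e / 4 + e / 4) = e by field; rewrite ?pnatr_eq0.
by [].
Qed.

Lemma cvgV_add u v a b : cvgV ip u a -> cvgV ip v b ->
  cvgV ip (fun n => u n + v n) (a + b).
Proof.
move=> ha hb e e0.
have e4 : 0 < e / 4 by rewrite divr_gt0.
have [N1 H1] := ha _ e4; have [N2 H2] := hb _ e4.
exists (maxn N1 N2) => n hn.
have := H1 n (leq_trans (leq_maxl _ _) hn); have := H2 n (leq_trans (leq_maxr _ _) hn).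
rewrite !nsq_norm => h2 h1.
have -> : u n + v n - (a + b) = (u n - a) + (v n - b) by rewrite opprD addrACA.
apply: le_lt_trans (nsqD_le _ _) _.
apply: (lt_le_trans (_ : _ < 2 * (e / 4 + e / 4))).
  by rewrite ltr_pM2l // ltrD.
by have -> : 2 * (e / 4 + e / 4) = e by field.
Qed.

Lemma cvgV_ipl u a z : cvgV ip u a -> cvgK (fun n => ip (u n) z) (ip a z).
Proof.
move=> ha e e0.
have nz0 : 0 < nsq ip z + 1 by rewrite ltr_pwDr ?nsq_ge0.
have e' : 0 < e ^+ 2 / (nsq ip z + 1) by rewrite divr_gt0 ?exprn_gt0.
have [N H] := ha _ e'; exists N => n hn; have := H n hn; rewrite nsq_norm => h.
apply: sqr_lt; [exact: normr_ge0 | exact: e0 |].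
rewrite -ipBl; apply: le_lt_trans (CS _ _) _.
apply: (le_lt_trans (_ : _ <= e ^+ 2 / (nsq ip z + 1) * nsq ip z)).
  by rewrite ler_wpM2r ?nsq_ge0 ?ltW.
rewrite -mulrA gtr_pMr ?exprn_gt0 // mulrC ltr_pdivrMr // mul1r.
by rewrite ltrDl.
Qed.

Lemma cvgV_ipr u a z : cvgV ip u a -> cvgK (fun n => ip z (u n)) (ip z a).
Proof.
move=> /(@cvgV_ipl _ _ z) ha e e0; have [N H] := ha e e0; exists N => n hn.
by rewrite (ipC z) (ipC z a) -cjN -cjD normcj; apply: H.
Qed.

Lemma ge0_approx (t : K) :
  (forall e, 0 < e -> exists2 r, 0 <= r & `|t - r| < e) -> 0 <= t.
Proof.
move=> H; suff -> : t = `|t| by exact: normr_ge0.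
apply/eqP; rewrite -subr_eq0; apply/eqP/normr0_eq0/lt_all_eq0 => [|e e0].
  exact: normr_ge0.
have [r r0 hr] := H (e / 2) (divr_gt0 e0 (ltr0Sn _ 1)).
have h2 : `| `|t| - r| <= `|t - r| by have := ler_dist_dist t r; rewrite (ger0_norm r0).
rewrite (splitr e); apply: le_lt_trans (ler_distD r _ _) _.
by apply: ltrD => //; rewrite distrC; apply: le_lt_trans h2 hr.
Qed.

Lemma lim_ge0 (v : nat -> K) l N0 :
  (forall n, (N0 <= n)%N -> 0 <= v n) -> cvgK v l -> 0 <= l.
Proof.
move=> hv hl; apply: ge0_approx => e e0; have [N H] := hl e e0.
exists (v (maxn N N0)); first by apply: hv; rewrite leq_maxr.
by rewrite distrC; apply: H; rewrite leq_maxl.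
Qed.

Lemma cvgK_shift (v : nat -> K) l c : cvgK v l -> cvgK (fun n => v n - c) (l - c).
Proof.
move=> hl e e0; have [N H] := hl e e0; exists N => n hn.
by rewrite opprB addrA subrK; apply: H.
Qed.

Lemma lim_le (v : nat -> K) l b N0 :
  (forall n, (N0 <= n)%N -> v n <= b) -> cvgK v l -> l <= b.
Proof.
move=> hv hl; rewrite -subr_ge0.
have h : cvgK (fun n => b - v n) (b - l).
  move=> e e0; have [N H] := @cvgK_shift v l b hl e e0; exists N => n hn.
  have -> : b - v n - (b - l) = - (v n - b - (l - b)) by ring.
  by rewrite normrN; apply: H.
apply: (@lim_ge0 (fun n => b - v n) _ N0) h => n hn.
by rewrite subr_ge0; apply: hv.
Qed.

Lemma lim_ge (v : nat -> K) l b N0 :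
  (forall n, (N0 <= n)%N -> b <= v n) -> cvgK v l -> b <= l.
Proof.
move=> hv hl; rewrite -subr_ge0; apply: (@lim_ge0 _ _ N0) (@cvgK_shift v l b hl).
by move=> n hn; rewrite subr_ge0; apply: hv.
Qed.

Definition ps (g : nat -> K) n := \sum_(j < n) g j.

Lemma psS g n : ps g n.+1 = ps g n + g n.
Proof. by rewrite /ps big_ord_recr. Qed.

Lemma ps_mono g m n : (forall j, 0 <= g j) -> (m <= n)%N -> ps g m <= ps g n.
Proof.
move=> g0 /subnKC <-; elim: (n - m)%N => [|k IH]; first by rewrite addn0.
by rewrite addnS psS (le_trans IH) // lerDl.
Qed.

Lemma ps_ge0 g n : (forall j, 0 <= g j) -> 0 <= ps g n.
Proof. by move=> g0; rewrite /ps sumr_ge0. Qed.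

Lemma ps_le_lim g s n : (forall j, 0 <= g j) -> cvgK (ps g) s -> ps g n <= s.
Proof.
move=> g0 hs; apply: (@lim_ge _ _ _ n) hs => m hm; exact: ps_mono.
Qed.

Lemma psumE N f n : psum N f n = ps (fun j => if inJ N j then f j else 0) n.
Proof. by rewrite /psum /ps big_mkcond. Qed.
Lemma psumVE N (f : nat -> V) n :
  psumV N f n = \sum_(j < n) (if inJ N j then f j else 0).
Proof. by rewrite /psumV big_mkcond. Qed.

Lemma cvg_squeeze (v : nat -> K) s :
  (forall e, 0 < e -> exists N, forall n, (N <= n)%N -> s - e < v n) ->
  (forall n, v n <= s) -> cvgK v s.
Proof.
move=> hlo hup e e0; have [N H] := hlo e e0; exists N => n hn.
have hr : v n - s \is Num.real by rewrite realBC ger0_real // subr_ge0.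
rewrite real_ltr_norml // (le_lt_trans _ e0) ?subr_le0 ?hup // andbT.
by rewrite -(ltrD2l s) [s + (v n - s)]addrC subrK; apply: H.
Qed.

Section FrameOp.
Variables (N : option nat) (u : nat -> V) (S : V -> V) (B : K).
Hypothesis SD : forall x y, S (x + y) = S x + S y.
Hypothesis Ssa : forall x y, ip (S x) y = ip x (S y).
Hypothesis Hq : forall w, cvgK (psum N (fun j => `|ip w (u j)| ^+ 2)) (ip (S w) w).
Hypothesis B0 : 0 < B.
Hypothesis HB : forall w, ip (S w) w <= B * nsq ip w.
Hypothesis Hcompl : forall x : nat -> V, cauchyV ip x -> exists l, cvgV ip x l.

Let c w j := if inJ N j then ip w (u j) else 0.
Let a w j := `|c w j| ^+ 2.
Let g w j := c w j *: u j.

Lemma a_ge0 w j : 0 <= a w j.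
Proof. by rewrite /a exprn_ge0. Qed.

Lemma psum_a w n : psum N (fun j => `|ip w (u j)| ^+ 2) n = \sum_(0 <= j < n) a w j.
Proof.
rewrite psumE /ps big_mkord; apply: eq_bigr => j _.
by rewrite /a /c; case: inJ; rewrite ?normr0 ?expr0n.
Qed.

Lemma psumV_g w n : psumV N (fun j => ip w (u j) *: u j) n = \sum_(0 <= j < n) g w j.
Proof.
rewrite psumVE big_mkord; apply: eq_bigr => j _.
by rewrite /g /c; case: inJ; rewrite ?scale0r.
Qed.

Lemma sum_a_le x m n : \sum_(m <= j < n) a x j <= B * nsq ip x.
Proof.
have hc : cvgK (ps (a x)) (ip (S x) x).
  move=> e e0; have [M H] := Hq x e e0; exists M => k hk.
  by have := H k hk; rewrite psum_a /ps big_mkord.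
have h1 : ps (a x) n <= ip (S x) x := @ps_le_lim (a x) _ n (a_ge0 x) hc.
have h0 : \sum_(m <= j < n) a x j <= ps (a x) n.
  rewrite /ps -(big_mkord xpredT (a x)).
  have [mn|nm] := leqP m n; last first.
    by rewrite [X in X <= _]big_geq ?(ltnW nm) //; apply: sumr_ge0 => j _; apply: a_ge0.
  by rewrite (big_cat_nat (leq0n m) mn) /= lerDr; apply: sumr_ge0 => j _; apply: a_ge0.
exact: le_trans h0 (le_trans h1 (HB x)).
Qed.

Lemma bessel_block w m n :
  nsq ip (\sum_(m <= j < n) g w j) <= B * \sum_(m <= j < n) a w j.
Proof.
set x := \sum_(m <= j < n) g w j.
pose d j := if inJ N j then ip x (u j) else 0.
have e1 : nsq ip x = \sum_(m <= j < n) c w j * cj (d j).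
  rewrite {1}/nsq {1}/x ip_suml; apply: eq_bigr => j _.
  by rewrite /g /d /c ipZl; case: inJ; rewrite ?mul0r // -ipC.
have h1 : nsq ip x <= \sum_(m <= j < n) `|c w j| * `|d j|.
  rewrite -nsq_norm e1; apply: le_trans (ler_norm_sum _ _ _) _.
  by apply: ler_sum => j _; rewrite normrM normcj.
have h2 : \sum_(m <= j < n) `|d j| ^+ 2 <= B * nsq ip x.
  apply: le_trans (sum_a_le x m n); apply: ler_sum => j _.
  by rewrite /a /c /d; case: inJ.
have h3 : forall j, 2 * B * (`|c w j| * `|d j|) <= B ^+ 2 * a w j + `|d j| ^+ 2.
  move=> j; rewrite -subr_ge0.
  have -> : B ^+ 2 * a w j + `|d j| ^+ 2 - 2 * B * (`|c w j| * `|d j|) =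
    (B * `|c w j| - `|d j|) ^+ 2 by rewrite /a; ring.
  have r1 : B * `|c w j| \is Num.real by rewrite realM ?ger0_real ?normr_ge0 ?ltW.
  have r2 : `|d j| \is Num.real by rewrite ger0_real ?normr_ge0.
  by apply: real_exprn_even_ge0 => //; rewrite realB.
have h4 : 2 * B * nsq ip x <= B ^+ 2 * \sum_(m <= j < n) a w j + B * nsq ip x.
  apply: le_trans (_ : 2 * B * \sum_(m <= j < n) `|c w j| * `|d j| <= _).
    by rewrite ler_wpM2l // mulr_ge0 // ltW.
  rewrite mulr_sumr; apply: le_trans (_ : \sum_(m <= j < n)
    (B ^+ 2 * a w j + `|d j| ^+ 2) <= _); first by apply: ler_sum => j _; apply: h3.
  by rewrite big_split /= -mulr_sumr lerD2l.
have h5 : B * nsq ip x <= B * (B * \sum_(m <= j < n) a w j).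
  rewrite -(lerD2r (B * nsq ip x)) mulrA -expr2; apply: le_trans h4.
  by rewrite -mulrDl -mulr2n mulr_natl le_refl.
by rewrite ler_pM2l in h5.
Qed.


Lemma cvgK_ext (v1 v2 : nat -> K) l : (forall n, v1 n = v2 n) -> cvgK v1 l -> cvgK v2 l.
Proof. by move=> h H e e0; have [M HM] := H e e0; exists M => n hn; rewrite -h; apply: HM. Qed.
Lemma cvgV_ext (v1 v2 : nat -> V) l : (forall n, v1 n = v2 n) -> cvgV ip v1 l -> cvgV ip v2 l.
Proof. by move=> h H e e0; have [M HM] := H e e0; exists M => n hn; rewrite -h; apply: HM. Qed.

Arguments cvgK_unique {u a b}. Arguments cvgV_unique {u a b}.
Arguments cvgV_add {u v a b}. Arguments cvgV_ipl {u a} z. Arguments cvgV_ipr {u a} z.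
Arguments cvgK_ext {v1 v2 l}. Arguments cvgV_ext {v1 v2 l}.

Lemma gsplit w m n : (m <= n)%N ->
  \sum_(0 <= j < n) g w j - \sum_(0 <= j < m) g w j = \sum_(m <= j < n) g w j.
Proof. by move=> mn; rewrite (big_cat_nat (leq0n m) mn) /= addrAC subrr add0r. Qed.
Lemma asplit w m n : (m <= n)%N ->
  \sum_(0 <= j < n) a w j - \sum_(0 <= j < m) a w j = \sum_(m <= j < n) a w j.
Proof. by move=> mn; rewrite (big_cat_nat (leq0n m) mn) /= addrAC subrr add0r. Qed.

Lemma sum_a_real w m n : \sum_(m <= j < n) a w j \is Num.real.
Proof. by apply: ger0_real; apply: sumr_ge0 => j _; apply: a_ge0. Qed.

Lemma cauchy_psumV w : cauchyV ip (psumV N (fun j => ip w (u j) *: u j)).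
Proof.
move=> e e0.
have e1 : 0 < e / B / 2 by rewrite !divr_gt0.
have [M H] := Hq w _ e1.
exists M => m n hm hn.
wlog mn : m n hm hn / (m <= n)%N.
  move=> W; have [mn|nm] := leqP m n; first exact: W.
  rewrite nsqB; apply: W => //; exact: ltnW.
rewrite nsq_norm !psumV_g nsqB gsplit //.
apply: le_lt_trans (bessel_block w m n) _.
have h1 := H n hn; have h2 := H m hm; rewrite !psum_a in h1 h2.
rewrite -asplit //.
set sn := \sum_(0 <= j < n) a w j in h1 *; set sm := \sum_(0 <= j < m) a w j in h2 *.
have hr : sn - sm \is Num.real by rewrite realB ?sum_a_real.
have h3 : sn - sm < e / B.
  apply: le_lt_trans (real_ler_norm hr) _.
  have -> : sn - sm = (sn - ip (S w) w) - (sm - ip (S w) w) by ring.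
  apply: le_lt_trans (ler_normB _ _) _.
  by rewrite (splitr (e / B)) ltrD.
by rewrite -ltr_pdivlMl // mulrC.
Qed.

Let X w n := psumV N (fun j => ip w (u j) *: u j) n.

Lemma X_sa w z n : ip (X w n) z = ip w (X z n).
Proof.
rewrite /X !psumVE ip_suml ip_sumr; apply: eq_bigr => j _.
case: inJ; rewrite ?ip0l ?ip0r // ipZl ipZr mulrC; congr (_ * _).
by rewrite -ipC.
Qed.

Lemma X_q w n : ip (X w n) w = psum N (fun j => `|ip w (u j)| ^+ 2) n.
Proof.
rewrite /X psumVE psumE ip_suml; apply: eq_bigr => j _.
by case: inJ; rewrite ?ip0l // ipZl ipmulC.
Qed.

Lemma X_add w z n : X (w + z) n = X w n + X z n.
Proof.
rewrite /X !psumVE -big_split; apply: eq_bigr => j _ /=.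
by case: inJ; rewrite ?addr0 // ipDl scalerDl.
Qed.

Lemma frame_op w : cvgV ip (psumV N (fun j => ip w (u j) *: u j)) (S w).
Proof.
have lim x : exists l, cvgV ip (X x) l := Hcompl _ (cauchy_psumV x).
have Hsa x z lx lz : cvgV ip (X x) lx -> cvgV ip (X z) lz -> ip lx z = ip x lz.
  move=> hx hz; apply: (cvgK_unique (cvgV_ipl z hx)).
  apply: cvgK_ext (cvgV_ipr x hz) => n; by rewrite X_sa.
have Hq' x lx : cvgV ip (X x) lx -> ip lx x = ip (S x) x.
  move=> hx; apply: (cvgK_unique (cvgV_ipl x hx)).
  by apply: cvgK_ext (Hq x) => n; rewrite X_q.
have Hadd x z lx lz lxz : cvgV ip (X x) lx -> cvgV ip (X z) lz ->
    cvgV ip (X (x + z)) lxz -> lxz = lx + lz.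
  move=> hx hz hxz; apply: (cvgV_unique hxz).
  by apply: cvgV_ext (cvgV_add hx hz) => n; rewrite X_add.
have [lw hw] := lim w.
set D := lw - S w.
have [lD hD] := lim D; have [lv hv] := lim (w + D).
have ev := Hadd _ _ _ _ _ hw hD hv.
have h0 := Hq' _ _ hv.
have e1 : ip D w = 0 by rewrite /D ipBl (Hq' _ _ hw) subrr.
have e2 : ip (lD - S D) D = 0 by rewrite ipBl (Hq' _ _ hD) subrr.
have e3 : ip (lD - S D) w = ip D D by rewrite ipBl (Hsa _ _ _ _ hD hw) Ssa -ipBr.
have e4 : ip (D + (lD - S D)) (w + D) = 0.
  have -> : D + (lD - S D) = lv - S (w + D) by rewrite ev SD opprD addrACA.
  by rewrite ipBl h0 subrr.
have eD : lw - S w = D by [].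
clearbody D; move: e2 e3 e4; set E := lD - S D; clearbody E => e2 e3 e4.
rewrite !ipDl !ipDr e1 e2 e3 add0r addr0 in e4.
have : nsq ip D *+ 2 = 0 by rewrite mulr2n /nsq; exact: e4.
move/eqP; rewrite mulrn_eq0 /= => /eqP /nsq_eq0 D0; move: eD; rewrite D0 => /eqP; rewrite subr_eq0 => /eqP <-.
exact: hw.
Qed.

End FrameOp.

Section GS.
Variable sq : K -> K.
Hypothesis sq_ge0 : forall r, 0 <= sq r.
Hypothesis sqK : forall r, 0 <= r -> sq r ^+ 2 = r.
Variables (P : {linear V -> V}) (d : nat -> V).
Hypothesis PP : forall x, P (P x) = P x.
Hypothesis Psa : forall x y, ip (P x) y = ip x (P y).
Hypothesis dense : forall x e, 0 < e -> exists n, `|nsq ip (x - d n)| < e.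

Definition gsr (s : seq V) (v : V) : V := v - \sum_(e <- s) ip v e *: e.
Definition nz (x : V) : V := if x == 0 then 0 else (sq (nsq ip x))^-1 *: x.
Fixpoint fs n := if n is n'.+1 then rcons (fs n') (nz (gsr (fs n') (P (d n')))) else [::].
Definition f n := nth 0 (fs n.+1) n.

Lemma size_fs n : size (fs n) = n.
Proof. by elim: n => //= n IH; rewrite size_rcons IH. Qed.

Lemma fsS n : fs n.+1 = rcons (fs n) (f n).
Proof. by rewrite /f [fs n.+1]/= nth_rcons size_fs ltnn eqxx. Qed.

Lemma sum_fs (F : V -> V) n : \sum_(e <- fs n) F e = \sum_(m < n) F (f m).
Proof.
elim: n => [|n IH]; first by rewrite big_nil big_ord0.
by rewrite fsS big_rcons big_ord_recr /= IH addrC.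
Qed.

Lemma nz_unit x : nz x = 0 \/ nsq ip (nz x) = 1.
Proof.
rewrite /nz; case: eqP => [_|/eqP x0]; first by left.
right; have nx0 : nsq ip x != 0 by apply: contra x0 => /eqP /nsq_eq0 ->.
have hs : sq (nsq ip x) != 0.
  by apply: contra nx0 => /eqP h; rewrite -(sqK _ (nsq_ge0 x)) h expr0n.
have ci : cj (sq (nsq ip x))^-1 = (sq (nsq ip x))^-1 by rewrite cj_ge0 ?invr_ge0.
rewrite /nsq ipZl ipZr ci -/(nsq ip x).
set s := sq _ in hs *; have e : nsq ip x = s ^+ 2 by rewrite /s sqK // nsq_ge0.
by rewrite e; field.
Qed.

Lemma nz_scale x : x = sq (nsq ip x) *: nz x.
Proof.
rewrite /nz; case: eqP => [->|/eqP x0]; first by rewrite scaler0.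
have nx0 : nsq ip x != 0 by apply: contra x0 => /eqP /nsq_eq0 ->.
have hs : sq (nsq ip x) != 0.
  by apply: contra nx0 => /eqP h; rewrite -(sqK _ (nsq_ge0 x)) h expr0n.
by rewrite scalerA mulfV ?scale1r.
Qed.

Lemma f_unit n : f n = 0 \/ nsq ip (f n) = 1.
Proof. by rewrite /f /= nth_rcons size_fs ltnn eqxx; apply: nz_unit. Qed.

Lemma fE n : f n = nz (gsr (fs n) (P (d n))).
Proof. by rewrite /f /= nth_rcons size_fs ltnn eqxx. Qed.

Lemma Pf n : P (f n) = f n.
Proof.
elim/ltn_ind: n => n IH.
rewrite fE /nz; case: eqP => _; first exact: linear0.
rewrite linearZ /=; congr (_ *: _).
rewrite /gsr linearB /= PP sum_fs linear_sum /=; congr (_ - _).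
by apply: eq_bigr => i _; rewrite linearZ /= IH.
Qed.

Lemma ortho_lt n : forall m, (m < n)%N -> ip (f n) (f m) = 0.
Proof.
elim/ltn_ind: n => n IH m mn.
have oth : forall i j, (i < n)%N -> (j < n)%N -> i != j -> ip (f i) (f j) = 0.
  move=> i j ii jj ij; have [lt|gt|eq] := ltngtP i j.
  - by rewrite ipC IH // cj0.
  - by rewrite IH.
  - by rewrite eq eqxx in ij.
rewrite fE /nz; case: eqP => _; first by rewrite ip0l.
set s0 := (sq _)^-1; rewrite ipZl /gsr ipBl sum_fs ip_suml.
rewrite (bigD1 (Ordinal mn)) //= ipZl.
rewrite big1 => [|i /negbTE ne]; last first.
  rewrite ipZl oth //; first by rewrite mulr0.
  by apply: contraFN ne => /eqP h; apply/eqP; apply: val_inj; exact: h.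
rewrite addr0 -/(nsq ip (f m)); case: (f_unit m) => [->|->]; by rewrite ?ip0r ?mul0r ?mulr1 ?subrr ?mulr0.
Qed.

Lemma ortho i j : i != j -> ip (f i) (f j) = 0.
Proof.
move=> ij; have [lt|gt|eq] := ltngtP i j.
- by rewrite ipC ortho_lt // cj0.
- by rewrite ortho_lt.
- by rewrite eq eqxx in ij.
Qed.

Lemma span n : exists a : nat -> K, P (d n) = \sum_(m < n.+1) a m *: f m.
Proof.
set v := P (d n); set g := gsr (fs n) v.
exists (fun m => if (m < n)%N then ip v (f m) else sq (nsq ip g)).
rewrite big_ord_recr /= ltnn -(_ : nz g = f n); last by rewrite fE.
rewrite -nz_scale /g /gsr sum_fs.
have -> : \sum_(i < n) (if (i < n)%N then ip v (f i) else sq (nsq ip (v -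
   \sum_(i0 < n) ip v (f i0) *: f i0))) *: f i = \sum_(i < n) ip v (f i) *: f i.
  by apply: eq_bigr => i _; rewrite ltn_ord.
by rewrite addrC subrK.
Qed.


Lemma nsqD p q : nsq ip (p + q) = nsq ip p + nsq ip q + ip p q + ip q p.
Proof. rewrite /nsq ipDl !ipDr; ring. Qed.

Lemma ip_f_comb m n (b : nat -> K) : (m < n)%N ->
  ip (f m) (\sum_(i < n) b i *: f i) = cj (b m) * nsq ip (f m).
Proof.
move=> mn; rewrite ip_sumr (bigD1 (Ordinal mn)) //= ipZr big1 ?addr0 // => i ne.
have mi : m != i.
  by apply: contra ne => /eqP h; apply/eqP; apply: val_inj => /=; rewrite h.
by rewrite ipZr ortho ?mulr0.
Qed.

Lemma nsq_f_simp (t : K) m : t * nsq ip (f m) = t \/ f m = 0.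
Proof. by case: (f_unit m) => ->; [right | left; rewrite mulr1]. Qed.

Lemma contraction x y : P x = x -> nsq ip (x - P y) <= nsq ip (x - y).
Proof.
move=> Px; have -> : x - P y = P (x - y) by rewrite linearB /= Px.
set z := x - y.
have e : nsq ip z = nsq ip (P z) + nsq ip (z - P z).
  have e1 : ip (P z) (z - P z) = 0 by rewrite ipBr -[ip (P z) (P z)]Psa PP subrr.
  have e2 : ip (z - P z) (P z) = 0 by rewrite ipBl -[ip (P z) (P z)]Psa PP -Psa subrr.
  by rewrite -{1}(subrK (P z) z) nsqD e1 e2 !addr0 addrC.
by rewrite e lerDl nsq_ge0.
Qed.

Lemma parseval w : cvgK (ps (fun m => `|ip w (f m)| ^+ 2)) (ip (P w) w).
Proof.
set x := P w.
pose c m := ip w (f m).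
have cx m : ip x (f m) = c m by rewrite /x Psa Pf.
pose Q n := \sum_(m < n) c m *: f m.
have ipfQ m n : (m < n)%N -> ip (f m) (Q n) = cj (c m).
  move=> mn; rewrite ip_f_comb //.
  rewrite /c; by case: (nsq_f_simp (cj (ip w (f m))) m) => // ->; rewrite ip0r cj0 mul0r.
have orthQ n (b : nat -> K) : ip (x - Q n) (\sum_(i < n) b i *: f i) = 0.
  rewrite ip_sumr big1 // => i _; rewrite ipZr ipBl cx.
  rewrite ipC ipfQ // cjK subrr mulr0 //.
have nsqxQ n : nsq ip (x - Q n) = nsq ip x - ps (fun m => `|ip w (f m)| ^+ 2) n.
  have h := orthQ n c; rewrite -/(Q n) in h.
  rewrite {1}/nsq ipBr h subr0 ipBl; congr (_ - _).
  rewrite /Q ip_suml /ps; apply: eq_bigr => i _.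
  by rewrite ipZl ipC cx cj_norm.
have best n (b : nat -> K) : nsq ip (x - Q n) <= nsq ip (x - \sum_(i < n) b i *: f i).
  have ey : Q n - \sum_(i < n) b i *: f i = \sum_(i < n) (c i - b i) *: f i.
    by rewrite /Q -sumrB; apply: eq_bigr => i _; rewrite scalerBl.
  have -> : x - \sum_(i < n) b i *: f i = (x - Q n) + \sum_(i < n) (c i - b i) *: f i.
    by rewrite -ey addrA subrK.
  rewrite [X in _ <= X]nsqD (orthQ n (fun i => c i - b i)).
  rewrite [ip (\sum_(i < n) _ *: _) (x - Q n)]ipC (orthQ n (fun i => c i - b i)) cj0.
  by rewrite !addr0 lerDl nsq_ge0.
have nx : nsq ip x = ip (P w) w by rewrite /nsq /x Psa PP.
rewrite -nx.
apply: cvg_squeeze => [e e0|n]; last first.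
  by rewrite -subr_ge0 -nsqxQ nsq_ge0.
have [i hi] := dense x e e0.
exists i.+1 => n hn.
rewrite ltrBlDr addrC -ltrBlDr.
apply: le_lt_trans (_ : _ <= nsq ip (x - Q i.+1)) _.
  rewrite nsqxQ lerD2l lerN2; apply: ps_mono => // m; exact: exprn_ge0.
have [a ha] := span i.
apply: le_lt_trans (best _ a) _.
rewrite -ha; apply: le_lt_trans (@contraction x (d i) (PP w)) _.
by rewrite -nsq_norm.
Qed.

End GS.

Fixpoint unpair (i : nat) : nat * nat :=
  if i is i'.+1 then
    (let p := unpair i' in if p.2 is b.+1 then (p.1.+1, b) else (0, p.1.+1)%N)
  else (0, 0)%N.

Fixpoint tri (e : nat) : nat := if e is e'.+1 then (tri e' + e'.+1)%N else 0%N.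

Lemma unpair_tri e j : (j <= e)%N -> unpair (tri e + j) = (j, e - j)%N.
Proof.
elim: e j => [|e IHe] j.
  by rewrite leqn0 => /eqP ->.
elim: j => [_|j IHj] /=.
  by rewrite addn0 addnS /= IHe // subnn.
move=> je; rewrite addnS /= IHj ?(ltnW je) //.
by rewrite subSn ?(ltnW je) //= subSS; case: (e - j)%N (subn_gt0 j e) => // k _.
Qed.

Lemma tri_ge n : (n <= tri n)%N.
Proof. by elim: n => //= n IH; rewrite -[n.+1]add0n leq_add. Qed.

Section DS.
Variable A : nat -> nat -> K.
Hypothesis A0 : forall j m, 0 <= A j m.

Definition Hs n := \sum_(0 <= i < n) A (unpair i).1 (unpair i).2.

Lemma Hs_tri d : Hs (tri d) = \sum_(0 <= j < d) \sum_(0 <= m < d - j) A j m.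
Proof.
elim: d => [|d IH]; first by rewrite /Hs !big_geq.
rewrite /Hs /= (big_cat_nat (leq0n _) (leq_addr _ _)) /= -/(Hs (tri d)) IH.
have -> : \sum_(tri d <= i < tri d + d.+1) A (unpair i).1 (unpair i).2 =
    \sum_(0 <= i < d.+1) A i (d - i).
  rewrite -{1}[tri d]add0n big_addn addKn; apply: eq_big_nat => i /andP [_ hi].
  by rewrite addnC unpair_tri.
rewrite [in RHS]big_nat_recr //= subSnn big_nat1.
have -> : \sum_(0 <= i < d) \sum_(0 <= m < d.+1 - i) A i m =
    \sum_(0 <= i < d) (\sum_(0 <= m < d - i) A i m + A i (d - i)).
  apply: eq_big_nat => i /andP [_ hi]; rewrite subSn ?(ltnW hi) //.
  by rewrite big_nat_recr.
by rewrite big_split /= [in LHS]big_nat_recr //= subnn addrA.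
Qed.


Lemma lt_from_norm (a b e : K) : a <= b -> `|a - b| < e -> b - e < a.
Proof.
move=> ab h; rewrite distrC ger0_norm ?subr_ge0 // in h.
by rewrite ltrBlDr addrC -ltrBlDr.
Qed.

Arguments lt_from_norm {a b e}.

Lemma widenA j m n : (m <= n)%N -> \sum_(0 <= i < m) A j i <= \sum_(0 <= i < n) A j i.
Proof. by move=> mn; rewrite !big_mkord; apply: (@ps_mono (A j) m n) => // i; apply: A0. Qed.

Arguments widenA j {m n}.

Lemma Hs_mono m n : (m <= n)%N -> Hs m <= Hs n.
Proof.
move=> mn; rewrite /Hs !big_mkord.
by apply: (@ps_mono (fun i => A (unpair i).1 (unpair i).2) m n) => // i; apply: A0.
Qed.

Arguments Hs_mono {m n}.

Variables (s : nat -> K) (S : K).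
Hypothesis Hin : forall j, cvgK (fun n => \sum_(0 <= m < n) A j m) (s j).
Hypothesis Hout : cvgK (fun n => \sum_(0 <= j < n) s j) S.

Lemma inner_le j n : \sum_(0 <= m < n) A j m <= s j.
Proof.
rewrite big_mkord; apply: (@ps_le_lim (A j) (s j) n) => [i|]; first exact: A0.
by move=> e e0; have [M H] := Hin j e e0; exists M => k hk; rewrite /ps -(big_mkord xpredT (A j)); apply: H.
Qed.

Lemma s_ge0 j : 0 <= s j.
Proof. by apply: le_trans (inner_le j 0); rewrite big_geq. Qed.

Lemma outer_le n : \sum_(0 <= j < n) s j <= S.
Proof.
rewrite big_mkord; apply: (@ps_le_lim s S n) => [i|]; first exact: s_ge0.
by move=> e e0; have [M H] := Hout e e0; exists M => k hk; rewrite /ps -(big_mkord xpredT s); apply: H.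
Qed.

Lemma Hs_le n : Hs n <= S.
Proof.
apply: le_trans (Hs_mono (tri_ge n)) _; rewrite Hs_tri.
apply: le_trans (outer_le n); apply: ler_sum => j _; exact: inner_le.
Qed.

Lemma rect_tri J M :
  \sum_(0 <= j < J) \sum_(0 <= m < M) A j m <= Hs (tri (J + M)).
Proof.
rewrite Hs_tri (big_cat_nat (leq0n J) (leq_addr M J)) /=.
apply: le_trans (_ : _ <= \sum_(0 <= j < J) \sum_(0 <= m < J + M - j) A j m) _.
  apply: ler_sum_nat => j /andP [_ hj]; apply: widenA.
  by rewrite addnC -addnBA ?leq_addr // ltnW.
rewrite lerDl; apply: sumr_ge0 => j _; apply: sumr_ge0 => m _; exact: A0.
Qed.

Lemma dseries : cvgK Hs S.
Proof.
apply: cvg_squeeze => [e e0|n]; last exact: Hs_le.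
have e2 : 0 < e / 2 by rewrite divr_gt0.
have [J HJ] := Hout _ e2.
have hJ := lt_from_norm (outer_le J) (HJ J (leqnn J)).
pose e3 := e / 2 / J.+1%:R.
have e3p : 0 < e3 by rewrite divr_gt0.
have hM : forall J0, exists M, forall j, (j < J0)%N -> s j - e3 < \sum_(0 <= m < M) A j m.
  elim => [|J0 [M1 H1]]; first by exists 0%N.
  have [M2 H2] := Hin J0 _ e3p.
  exists (maxn M1 M2) => j; rewrite ltnS leq_eqVlt => /orP [/eqP ->|jJ].
    apply: lt_le_trans (widenA _ (leq_maxr M1 M2)).
    exact: lt_from_norm (inner_le J0 M2) (H2 M2 (leqnn M2)).
  by apply: lt_le_trans (widenA _ (leq_maxl M1 M2)); apply: H1.
have [M HM] := hM J.
exists (tri (J + M)) => n hn.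
apply: lt_le_trans (Hs_mono hn); apply: lt_le_trans (rect_tri J M).
apply: lt_le_trans (_ : \sum_(0 <= j < J) (s j - e3) <= _); last first.
  by apply: ler_sum_nat => j /andP [_ hj]; apply: ltW; apply: HM.
rewrite sumrB sumr_const_nat subn0.
have h3 : e3 *+ J <= e / 2.
  have -> : e / 2 = e3 *+ J.+1.
    rewrite /e3 -mulr_natr; field; by rewrite nat1r pnatr_eq0.
  by rewrite mulrS lerDr ltW.
apply: lt_le_trans (_ : \sum_(0 <= i < J) s i - e / 2 <= _); last by rewrite lerB.
have -> : S - e = S - e / 2 - e / 2 by rewrite -addrA -opprD -splitr.
by rewrite ltrD2r.
Qed.

End DS.

Lemma psum_Some_ge c (F : nat -> K) n : (c <= n)%N -> psum (Some c) F n = \sum_(j < c) F j.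
Proof.
move=> cn; rewrite /psum -(big_mkord (fun j => inJ (Some c) j)) -(big_mkord xpredT F).
by rewrite (big_nat_widen 0 c n xpredT F cn).
Qed.

Lemma filter_frame (h : nat -> V) (Q : V -> K) :
  (forall i, h i = 0 \/ nsq ip (h i) = 1) ->
  (forall w, cvgK (ps (fun i => `|ip w (h i)| ^+ 2)) (Q w)) ->
  exists N (u : nat -> V), (forall j, inJ N j -> nsq ip (u j) = 1) /\
     forall w, cvgK (psum N (fun j => `|ip w (u j)| ^+ 2)) (Q w).
Proof.
move=> hu hQ.
have unit x : x != 0 -> (exists i, x = h i) -> nsq ip x = 1.
  by move=> x0 [i e]; case: (hu i) => hi; rewrite e // hi; rewrite e hi eqxx in x0.
case: (classic (exists m, forall i, (m <= i)%N -> h i = 0)) => [[m hm]|Hinf].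
  pose L := [seq x <- [seq h i | i <- iota 0 m] | x != 0].
  exists (Some (size L)), (fun j => nth 0 L j); split.
    move=> j /= hj; have : nth 0 L j \in L by rewrite mem_nth.
    rewrite mem_filter => /andP [x0 /mapP [i _ e]].
    by apply: unit => //; exists i.
  move=> w.
  pose F x := `|ip w x| ^+ 2.
  have F0 : F 0 = 0 by rewrite /F ip0r normr0 expr0n.
  have eL : \sum_(j < size L) F (nth 0 L j) = ps (fun i => F (h i)) m.
    rewrite -(big_mkord xpredT (fun j => F (nth 0 L j))) -(big_nth 0 xpredT F) big_filter.
    rewrite big_mkcond big_map /ps -(big_mkord xpredT (fun i => F (h i))) /index_iota subn0.
    by apply: eq_bigr => i _; case: eqP => // ->; rewrite F0.
  have eB n : (m <= n)%N -> ps (fun i => F (h i)) n = ps (fun i => F (h i)) m.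
    move=> mn; rewrite /ps -!(big_mkord xpredT (fun i => F (h i))) (big_cat_nat (leq0n m) mn) /=.
    rewrite [X in _ + X]big_nat_cond [X in _ + X]big1 ?addr0 // => i /andP [/andP [mi _] _].
    by rewrite hm // F0.
  have eQ : Q w = ps (fun i => F (h i)) m.
    apply: (@cvgK_unique _ _ _ (hQ w)) => e e0; exists m => n hn.
    by rewrite eB // subrr normr0.
  move=> e e0; exists (size L) => n hn.
  by rewrite psum_Some_ge // eL -eQ subrr normr0.
have exP : forall m, exists i, (m <= i)%N && (h i != 0).
  move=> m; apply: NNPP => hn; apply: Hinf; exists m => i mi.
  by case: (eqVneq (h i) 0) => // hi; exfalso; apply: hn; exists i; rewrite mi hi.
pose nxt m := ex_minn (exP m).
have nxtP m : [/\ (m <= nxt m)%N, h (nxt m) != 0 &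
    forall i, (m <= i)%N -> (i < nxt m)%N -> h i = 0].
  rewrite /nxt; case: ex_minnP => n /andP [mn hn] hmin; split => // i mi inn.
  case: (eqVneq (h i) 0) => // hi; have := hmin i; rewrite mi hi => /(_ isT).
  by rewrite leqNgt inn.
pose sg k := iter k (fun x => nxt x.+1) (nxt 0).
have sgS k : sg k.+1 = nxt (sg k).+1 by [].
pose tau k := if k is k'.+1 then (sg k').+1 else nxt 0.
exists None, (fun j => h (sg j)); split.
  move=> j _; apply: unit; last by exists (sg j).
  by case: j => [|j]; [case: (nxtP 0) | rewrite sgS; case: (nxtP (sg j).+1)].
move=> w; pose F x := `|ip w x| ^+ 2.
have F0 : F 0 = 0 by rewrite /F ip0r normr0 expr0n.
have zeros a b : (a <= b)%N -> (forall i, (a <= i)%N -> (i < b)%N -> h i = 0) ->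
    ps (fun i => F (h i)) a = ps (fun i => F (h i)) b.
  move=> ab H; rewrite /ps -!(big_mkord xpredT (fun i => F (h i))) (big_cat_nat (leq0n a) ab) /=.
  rewrite [X in _ + X]big_nat_cond [X in _ + X]big1 ?addr0 // => i /andP [/andP [h1 h2] _].
  by rewrite H // F0.
have key k : ps (fun j => F (h (sg j))) k = ps (fun i => F (h i)) (tau k).
  elim: k => [|k IH].
    rewrite /tau -(zeros 0%N (nxt 0)) //; first by rewrite /ps !big_ord0.
    by case: (nxtP 0) => _ _ H i _; apply: H.
  rewrite psS IH [tau k.+1]/= psS; congr (_ + _).
  case: k {IH} => [|k] //=.
  case: (nxtP (sg k).+1) => le _ H; exact: zeros.
have sg_ge k : (k <= sg k)%N.
  elim: k => [|k IH] //; rewrite sgS; case: (nxtP (sg k).+1) => le _ _.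
  by apply: leq_trans le; rewrite ltnS.
have tau_ge k : (k <= tau k)%N by case: k => //= k; rewrite ltnS sg_ge.
move=> e e0; have [M HM] := hQ w e e0; exists M => k hk.
have -> : psum None (fun j => `|ip w (h (sg j))| ^+ 2) k = ps (fun j => F (h (sg j))) k by [].
by rewrite key; apply: HM; apply: leq_trans hk (tau_ge k).
Qed.

Definition rk1 (e : V) (x : V) : V := ip x e *: e.
Lemma rk1_lin e : linear (rk1 e).
Proof. by move=> a x y; rewrite /rk1 ipZlD scalerDl scalerA. Qed.
HB.instance Definition _ e := GRing.isLinear.Build K V V *:%R (rk1 e) (rk1_lin e).
Definition rk1L (e : V) : {linear V -> V} := GRing.Linear.clone K V V *:%R (rk1 e) _.
Lemma rk1L_E e x : rk1L e x = ip x e *: e. Proof. by []. Qed.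

Lemma bnd (M a b : K) : 0 <= a -> 0 <= b -> a <= M * b -> a <= (`|M| + 1) * b.
Proof.
move=> a0 b0 h.
have Mb : 0 <= M * b by apply: le_trans h.
apply: (le_trans h); rewrite -(ger0_norm Mb) normrM (ger0_norm b0).
by rewrite ler_wpM2r // lerDl.
Qed.

Section Final.
Variable sq : K -> K.
Hypothesis sq_ge0 : forall r, 0 <= sq r.
Hypothesis sqK : forall r, 0 <= r -> sq r ^+ 2 = r.

Theorem main_gen :
   separable_hilbert cj ip ->
   forall (T : {linear V -> V}) (Tinv : V -> V),
   positive_op ip T -> cancel T Tinv -> cancel Tinv T -> bounded_op ip Tinv ->
   forall k : K, 0 < k ->
   let Rop := fun w => k *: Tinv (Tinv w) in
   ((exists (N : option nat) (y : nat -> V),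
       (forall j, inJ N j -> in_ellipsoid ip T (y j)) /\ is_tight_frame ip N y k)
    <-> projection_decomposition ip Rop) /\
   (forall (N : option nat) (y : nat -> V),
       (forall j, inJ N j -> in_ellipsoid ip T (y j)) -> is_tight_frame ip N y k ->
       [/\ forall j, inJ N j -> nsq ip (Tinv (y j)) = 1,
           is_frame ip N (fun j => Tinv (y j)) &
           is_frame_operator ip N (fun j => Tinv (y j)) Rop]).
Proof.
move=> [_ Hcompl [dd Hdense]] T Tinv [[Mt HMt] Tsa Tpos] TK TiK [Mi HMi] k k0 Rop.
have kr : cj k = k by rewrite cj_ge0 ?ltW.
have Tisa x y : ip (Tinv x) y = ip x (Tinv y).
  by rewrite -{1}(TiK y) -Tsa TiK.
have TiD x y : Tinv (x + y) = Tinv x + Tinv y.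
  by apply: (can_inj TK); rewrite linearD /= !TiK.
have RD x y : Rop (x + y) = Rop x + Rop y by rewrite /Rop !TiD scalerDr.
have Rsa x y : ip (Rop x) y = ip x (Rop y) by rewrite /Rop ipZl ipZr kr !Tisa.
have Rq w : ip (Rop w) w = k * nsq ip (Tinv w) by rewrite /Rop ipZl Tisa.
pose Bi := `|Mi| + 1; pose Bt := `|Mt| + 1.
have Bi1 : 1 <= Bi by rewrite /Bi lerDr.
have Bt1 : 1 <= Bt by rewrite /Bt lerDr.
have HBi w : nsq ip (Tinv w) <= Bi * nsq ip w.
  by apply: bnd; rewrite ?nsq_ge0 // -[nsq ip (Tinv w)]nsq_norm -[nsq ip w]nsq_norm.
have HBt w : nsq ip (T w) <= Bt * nsq ip w.
  by apply: bnd; rewrite ?nsq_ge0 // -[nsq ip (T w)]nsq_norm -[nsq ip w]nsq_norm.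
have RB w : ip (Rop w) w <= (k * Bi) * nsq ip w.
  by rewrite Rq -mulrA; apply: ler_wpM2l; [exact: ltW | exact: HBi].
have kB0 : 0 < k * Bi by rewrite mulr_gt0 // (lt_le_trans ltr01).
have tf_q N y : (forall j, inJ N j -> in_ellipsoid ip T (y j)) -> is_tight_frame ip N y k ->
   forall v, cvgK (psum N (fun j => `|ip v (Tinv (y j))| ^+ 2)) (ip (Rop v) v).
  move=> Hy Htf v; rewrite Rq.
  apply: (@cvgK_ext _ _ _ _ (Htf (Tinv v))) => n.
  rewrite /psum; apply: eq_bigr => j hj.
  by case: (Hy j hj) => x [_ ->]; rewrite TK -Tsa TiK.
have q_tf N (u : nat -> V) : (forall j, inJ N j -> nsq ip (u j) = 1) ->
    (forall v, cvgK (psum N (fun j => `|ip v (u j)| ^+ 2)) (ip (Rop v) v)) ->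
    (forall j, inJ N j -> in_ellipsoid ip T (T (u j))) /\
    is_tight_frame ip N (fun j => T (u j)) k.
  move=> Hu H; split; first by move=> j hj; exists (u j); split => //; apply: Hu.
  move=> w; have := H (T w); rewrite Rq TK => h.
  apply: (@cvgK_ext _ _ _ _ h) => n; rewrite /psum; apply: eq_bigr => j _.
  by rewrite Tsa.
have part2 : forall (N : option nat) (y : nat -> V),
       (forall j, inJ N j -> in_ellipsoid ip T (y j)) -> is_tight_frame ip N y k ->
       [/\ forall j, inJ N j -> nsq ip (Tinv (y j)) = 1,
           is_frame ip N (fun j => Tinv (y j)) &
           is_frame_operator ip N (fun j => Tinv (y j)) Rop].
  move=> N y Hy Htf; split.
  - by move=> j hj; case: (Hy j hj) => x [hx ->]; rewrite TK.
  - exists (k / Bt), (k * Bi); split.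
    + by rewrite divr_gt0 // (lt_le_trans ltr01).
    + rewrite ler_pdivrMr; last exact: (lt_le_trans ltr01 Bt1).
      apply: (le_trans (_ : k <= k * Bi)); first by apply: ler_peMr => //; exact: ltW.
      apply: ler_peMr => //; apply: mulr_ge0; [exact: ltW | exact: le_trans ler01 Bi1].
    + move=> w; exists (ip (Rop w) w); split; first exact: tf_q.
      apply/andP; split; last exact: RB.
      have Bt0 : 0 < Bt by rewrite (lt_le_trans ltr01).
      rewrite Rq -mulrA; apply: ler_wpM2l; first exact: ltW.
      rewrite ler_pdivrMl // -{1}(TiK w); exact: HBt.
  - move=> w; exact: (@frame_op N (fun j => Tinv (y j)) Rop (k * Bi) RD Rsa (tf_q N y Hy Htf) kB0 RB Hcompl w).
split => //; split.
  move=> [N [y [Hy Htf]]].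
  have [u1 _ _] := part2 N y Hy Htf.
  exists N, (fun j => rk1L (Tinv (y j))); split.
    move=> j hj; split => [x|x z]; rewrite !rk1L_E.
      by rewrite ipZl -/(nsq ip _) u1 // mulr1.
    by rewrite ipZl ipZr -ipC mulrC.
  move=> w; exact: (@frame_op N (fun j => Tinv (y j)) Rop (k * Bi) RD Rsa (tf_q N y Hy Htf) kB0 RB Hcompl w).
move=> [N0 [P [HP Hconv]]].
pose F j := if inJ N0 j then f sq (P j) dd else (fun _ : nat => 0 : V).
pose h i := F (unpair i).1 (unpair i).2.
have hu i : h i = 0 \/ nsq ip (h i) = 1.
  rewrite /h /F; case: inJ; last by left.
  exact: (@f_unit sq sq_ge0 sqK).
have hQ w : cvgK (ps (fun i => `|ip w (h i)| ^+ 2)) (ip (Rop w) w).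
  pose s j := if inJ N0 j then ip (P j w) w else 0.
  have Hin j : cvgK (fun n => \sum_(0 <= m < n) `|ip w (F j m)| ^+ 2) (s j).
    rewrite /s /F; case hj : (inJ N0 j).
      have [PP Psa] := HP j hj.
      have := @parseval sq sq_ge0 sqK (P j) dd PP Psa Hdense w.
      apply: cvgK_ext => n; by rewrite /ps big_mkord.
    move=> e e0; exists 0%N => n _.
    by rewrite big1 ?subrr ?normr0 // => m _; rewrite ip0r normr0 expr0n.
  have Hout : cvgK (fun n => \sum_(0 <= j < n) s j) (ip (Rop w) w).
    have := @cvgV_ipl _ _ w (Hconv w).
    apply: cvgK_ext => n; rewrite /psumV ip_suml big_mkord big_mkcond /=.
    by apply: eq_bigr => j _; rewrite /s; case: inJ.
  have D := @dseries (fun j m => `|ip w (F j m)| ^+ 2) (fun j m => exprn_ge0 _ (normr_ge0 _))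
     s (ip (Rop w) w) Hin Hout.
  apply: (@cvgK_ext _ _ _ _ D) => n; by rewrite /Hs /ps big_mkord.
have [N [u [Hu1 Hu]]] := @filter_frame h (fun w => ip (Rop w) w) hu hQ.
exists N, (fun j => T (u j)); exact: q_tf.
Qed.

End Final.
End Gen.

Theorem proposition13 (R : realType) :
  (* real case: scalars R, conjugation = identity *)
  (forall (V : lmodType R) (ip : V -> V -> R),
   separable_hilbert (fun z => z) ip ->
   forall (T : {linear V -> V}) (Tinv : V -> V),
   positive_op ip T -> cancel T Tinv -> cancel Tinv T -> bounded_op ip Tinv ->
   forall k : R, 0 < k ->
   let Rop := fun w => k *: Tinv (Tinv w) in
   ((exists (N : option nat) (y : nat -> V),
       (forall j, inJ N j -> in_ellipsoid ip T (y j)) /\ is_tight_frame ip N y k)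
    <-> projection_decomposition ip Rop) /\
   (forall (N : option nat) (y : nat -> V),
       (forall j, inJ N j -> in_ellipsoid ip T (y j)) -> is_tight_frame ip N y k ->
       [/\ forall j, inJ N j -> nsq ip (Tinv (y j)) = 1,
           is_frame ip N (fun j => Tinv (y j)) &
           is_frame_operator ip N (fun j => Tinv (y j)) Rop]))
  /\
  (* complex case: scalars R[i], conjugation = complex conjugation *)
  (forall (V : lmodType R[i]) (ip : V -> V -> R[i]),
   separable_hilbert (fun z => z^*) ip ->
   forall (T : {linear V -> V}) (Tinv : V -> V),
   positive_op ip T -> cancel T Tinv -> cancel Tinv T -> bounded_op ip Tinv ->
   forall k : R[i], 0 < k ->
   let Rop := fun w => k *: Tinv (Tinv w) in
   ((exists (N : option nat) (y : nat -> V),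
       (forall j, inJ N j -> in_ellipsoid ip T (y j)) /\ is_tight_frame ip N y k)
    <-> projection_decomposition ip Rop) /\
   (forall (N : option nat) (y : nat -> V),
       (forall j, inJ N j -> in_ellipsoid ip T (y j)) -> is_tight_frame ip N y k ->
       [/\ forall j, inJ N j -> nsq ip (Tinv (y j)) = 1,
           is_frame ip N (fun j => Tinv (y j)) &
           is_frame_operator ip N (fun j => Tinv (y j)) Rop])).
Proof.
split.
- move=> V ip Hs.
  have IP : inner_product (fun z : R => z) ip by case: Hs.
  have cjn : forall z : R, z * z = `|z| ^+ 2.
    by move=> z; rewrite real_normK ?num_real // expr2.
  exact: (@main_gen R (fun z => z) V ip (fun _ _ => erefl) (fun _ _ => erefl)
    (fun _ => erefl) cjn (fun _ _ => erefl) IP (@Num.sqrt R) (@sqrtr_ge0 R)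
    (@sqr_sqrtr R) Hs).
- move=> V ip Hs.
  have IP : inner_product (fun z : R[i] => z^*) ip by case: Hs.
  have cjD : forall x y : R[i], (x + y)^* = x^* + y^* by move=> x y; rewrite rmorphD.
  have cjM : forall x y : R[i], (x * y)^* = x^* * y^* by move=> x y; rewrite rmorphM.
  have cjK : forall x : R[i], x^*^* = x by move=> x; rewrite conjCK.
  have cjn : forall z : R[i], z * z^* = `|z| ^+ 2 by move=> z; rewrite normCK.
  have cjr : forall r : R[i], 0 <= r -> r^* = r.
    by move=> r /ger0_real; rewrite CrealE => /eqP.
  have sq0 : forall r : R[i], 0 <= sqrtC `|r| by move=> r; rewrite sqrtC_ge0 normr_ge0.
  have sqK : forall r : R[i], 0 <= r -> sqrtC `|r| ^+ 2 = r.
    by move=> r r0; rewrite sqrtCK ger0_norm.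
  exact: (@main_gen R[i] (fun z => z^*) V ip cjD cjM cjK cjn cjr IP
    (fun r => sqrtC `|r|) sq0 sqK Hs).
Qed.
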